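(* Let $\alpha,\beta\in\mathbb R_\flat$ with $\alpha<\beta$. Then $\ell_\alpha(\mathbb N_0^d)\subseteq\ell_\beta(\mathbb N_0^d)$ and $\ell_{0,\alpha}(\mathbb N_0^d)\subseteq\ell_{0,\beta}(\mathbb N_0^d)$.
   Context: $\mathbb R_\flat=\mathbb R_+\cup\{\flat_\sigma:\sigma>0\}$, $\mathbb R_+=(0,\infty)$, ordered by the usual order on $\mathbb R_+$ together with: $x_1<\flat_{\sigma_1}<\flat_{\sigma_2}<x_2$ whenever $\sigma_1<\sigma_2$ and $x_1<1/2\le x_2$, $x_1,x_2\in\mathbb R_+$. For $n\in\mathbb N_0^d$, $|n|=\sum n_j$, $n!=\prod n_j!$. Weights: for $\alpha\in\mathbb R_+$, $h>0$, $\vartheta_{h,\alpha}(n)=e^{h|n|^{1/(2\alpha)}}$; for $\alpha=\flat_\sigma$, $\vartheta_{h,\flat_\sigma}(n)=h^{|n|}n!^{1/(2\sigma)}$. $\ell^\infty_{[\vartheta_{h,\alpha}]}(\mathbb N_0^d)$ is the space of complex sequences with $\sup_n|a_n|\vartheta_{h,\alpha}(n)<\infty$; $\ell_\alpha(\mathbb N_0^d)=\bigcup_{h>0}\ell^\infty_{[\vartheta_{h,\alpha}]}(\mathbb N_0^d)$ and $\ell_{0,\alpha}(\mathbb N_0^d)=\bigcap_{h>0}\ell^\infty_{[\vartheta_{h,\alpha}]}(\mathbb N_0^d)$, for every $\alpha\in\mathbb R_\flat$. *)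

(* Defs.v *)
From Stdlib Require Import Reals.
From Coquelicot Require Import Complex.
From mathcomp Require Import ssreflect ssrfun ssrbool eqtype ssrnat seq fintype bigop.

Set Implicit Arguments.
Unset Strict Implicit.

(* Elements of R_flat: a positive real x, or the symbol flat_sigma with sigma > 0. *)
Inductive Rflat : Type :=
| RFpos : R -> Rflat
| RFflat : R -> Rflat.

Definition Rflat_valid (a : Rflat) : Prop :=
  match a with
  | RFpos x => (0 < x)%R
  | RFflat s => (0 < s)%R
  end.

Definition Rflat_lt (a b : Rflat) : Prop :=
  match a, b with
  | RFpos x, RFpos y => (x < y)%R
  | RFpos x, RFflat _ => (x < / 2)%R
  | RFflat s1, RFflat s2 => (s1 < s2)%R
  | RFflat _, RFpos y => (/ 2 <= y)%R
  end.

Definition mindex (d : nat) := 'I_d -> nat.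
Definition mabs d (n : mindex d) : nat := \sum_(i < d) n i.
Definition mfact d (n : mindex d) : nat := \prod_(i < d) (n i)`!.

(* k^e for k : nat, e > 0 real, with 0^e = 0 *)
Definition natpow (k : nat) (e : R) : R :=
  match k with
  | O => 0%R
  | S _ => Rpower (INR k) e
  end.

Definition weight d (h : R) (a : Rflat) (n : mindex d) : R :=
  match a with
  | RFpos x => exp (h * natpow (mabs n) (/ (2 * x)))
  | RFflat s => (h ^ (mabs n) * Rpower (INR (mfact n)) (/ (2 * s)))%R
  end.

Definition in_linf_w d (h : R) (alpha : Rflat) (f : mindex d -> C) : Prop :=
  exists M : R, forall n : mindex d, (Cmod (f n) * weight h alpha n <= M)%R.

(* l_alpha = union over h > 0 ; l_{0,alpha} = intersection over h > 0 *)
Definition ell d (alpha : Rflat) (f : mindex d -> C) : Prop :=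
  exists h : R, (0 < h)%R /\ in_linf_w h alpha f.

Definition ell0 d (alpha : Rflat) (f : mindex d -> C) : Prop :=
  forall h : R, (0 < h)%R -> in_linf_w h alpha f.

(* Main.v *)
Require Import Defs.
From Stdlib Require Import Reals Lra Lia.
From Coquelicot Require Import Complex.
From mathcomp Require Import ssreflect ssrfun ssrbool eqtype ssrnat seq fintype bigop.
Open Scope R_scope.
Set Implicit Arguments.
Unset Strict Implicit.

Lemma exple x y : x <= y -> exp x <= exp y.
Proof. case=> [H|->]; [left; exact: exp_increasing|right=>//]. Qed.
Lemma lnle x y : 0 < x -> x <= y -> ln x <= ln y.
Proof. move=> Hx; case=> [H|->]; [left; exact: ln_increasing|right=>//]. Qed.

Lemma INRfact_pos m : 0 < INR (m`!).
Proof. apply: lt_0_INR; apply/ltP; exact: fact_gt0. Qed.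

Lemma INR_S m : INR (m.+1) = INR m + 1.
Proof. exact: S_INR. Qed.

Lemma ln_factS m : ln (INR (m.+1)`!) = ln (INR m.+1) + ln (INR m`!).
Proof.
rewrite factS -multE mult_INR ln_mult //; [apply: lt_0_INR; lia| exact: INRfact_pos].
Qed.

Lemma ln_fact_ge0 m : 0 <= ln (INR m`!).
Proof.
rewrite -ln_1; apply: lnle; first lra.
have := fact_gt0 m => /ltP H. apply: (le_INR 1); lia.
Qed.

Lemma ln_fact_le m : ln (INR m`!) <= INR m * ln (INR m).
Proof.
elim: m => [|m IH]; first by rewrite /= ln_1; lra.
rewrite ln_factS.
have H1 : INR m * ln (INR m) <= INR m * ln (INR m.+1).
  case: m IH => [|m] IH; first by rewrite /=; lra.
  apply: Rmult_le_compat_l; first exact: pos_INR.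
  apply: lnle; [apply: lt_0_INR; lia| apply: le_INR; lia].
rewrite !INR_S in H1 *; rewrite Rmult_plus_distr_r; lra.
Qed.

Lemma single_var b : exists c, forall m : nat, INR m * b <= ln (INR m`!) + c.
Proof.
have [N HN] := INR_unbounded (exp b).
exists (INR N * Rabs b) => m.
have HNb : 0 <= INR N * Rabs b by apply: Rmult_le_pos; [exact: pos_INR| exact: Rabs_pos].
elim: m => [|m IH]; first by rewrite /= ln_1; lra.
rewrite ln_factS.
have [Hle|Hlt] := Rle_lt_dec (exp b) (INR m.+1).
- have : b <= ln (INR m.+1) by rewrite -{1}(ln_exp b); apply: lnle => //; exact: exp_pos.
  rewrite INR_S; lra.
- have Hm : INR m.+1 <= INR N by lra.
  have := ln_fact_ge0 m.
  have Hp : 0 <= ln (INR m.+1) by rewrite -ln_1; apply: lnle; [lra| apply: (le_INR 1); lia].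
  have : INR m.+1 * b <= INR m.+1 * Rabs b.
    apply: Rmult_le_compat_l; [exact: pos_INR| exact: Rle_abs].
  have : INR m.+1 * Rabs b <= INR N * Rabs b.
    apply: Rmult_le_compat_r; [exact: Rabs_pos| lra].
  lra.
Qed.

Lemma seq_ln d (n : 'I_d -> nat) b c :
  (forall m : nat, INR m * b <= ln (INR m`!) + c) ->
  forall s : seq 'I_d,
  INR (\sum_(i <- s) n i) * b <= ln (INR (\prod_(i <- s) (n i)`!)) + INR (size s) * c.
Proof.
move=> Hc; elim=> [|i s IH]; first by rewrite !big_nil /= ln_1; lra.
rewrite !big_cons -plusE -multE plus_INR mult_INR ln_mult; first last.
- apply: lt_0_INR; apply/ltP; rewrite prodn_gt0 // => j; exact: fact_gt0.
- exact: INRfact_pos.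
have := Hc (n i). have -> : INR (size (i :: s)) = INR (size s) + 1 by rewrite -S_INR. rewrite -plusE -multE in IH. rewrite !Rmult_plus_distr_r. lra.
Qed.

Lemma fact_mul a b : (a`! * b`! <= (a + b)`!)%N.
Proof.
elim: a => [|a IH]; first by rewrite fact0 mul1n add0n.
rewrite addSn !factS -mulnA.
apply: leq_mul; [by rewrite ltnS leq_addr | exact: IH].
Qed.

Lemma seq_fact d (n : 'I_d -> nat) (s : seq 'I_d) :
  (\prod_(i <- s) (n i)`! <= (\sum_(i <- s) n i)`!)%N.
Proof.
elim: s => [|i s IH]; first by rewrite !big_nil.
rewrite !big_cons. apply: leq_trans (fact_mul _ _).
exact: leq_mul.
Qed.

Lemma mfact_le d (n : mindex d) : 1 <= INR (mfact n) <= INR ((mabs n)`!).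
Proof.
split.
- apply: (le_INR 1); apply/leP; rewrite prodn_gt0 // => j; exact: fact_gt0.
- apply: le_INR; apply/leP; exact: seq_fact.
Qed.

Lemma transfer d h a h' b K : 0 <= K -> (forall n : mindex d, weight h' b n <= K * weight h a n) ->
  forall f : mindex d -> C, in_linf_w h a f -> in_linf_w h' b f.
Proof.
move=> HK Hw f [M HM]; exists (K * M) => n.
have := HM n; have := Hw n; have := Cmod_ge_0 (f n) => H0 H1 H2.
apply: Rle_trans (_ : Cmod (f n) * (K * weight h a n) <= _).
  exact: Rmult_le_compat_l.
rewrite (Rmult_comm K) -Rmult_assoc Rmult_comm; exact: Rmult_le_compat_l.
Qed.

Lemma case_pp d x y : 0 < x -> x < y -> forall h, 0 < h -> forall n : mindex d,
  weight h (RFpos y) n <= 1 * weight h (RFpos x) n.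
Proof.
move=> Hx Hxy h Hh n; rewrite Rmult_1_l /=.
apply: exple; apply: Rmult_le_compat_l; first lra.
case: (mabs n) => [|k]; first by right.
rewrite /natpow; apply: Rle_Rpower; first by apply: (le_INR 1); lia.
apply: Rlt_le; apply: Rinv_lt_contravar; nra.
Qed.

Lemma case_ff d s1 s2 : 0 < s1 -> s1 < s2 -> forall h, 0 < h -> forall n : mindex d,
  weight h (RFflat s2) n <= 1 * weight h (RFflat s1) n.
Proof.
move=> Hs Hss h Hh n; rewrite Rmult_1_l /=.
apply: Rmult_le_compat_l; first by apply: pow_le; lra.
apply: Rle_Rpower; first exact: (proj1 (mfact_le n)).
apply: Rlt_le; apply: Rinv_lt_contravar; nra.
Qed.

Definition G x s h := let p := / (2 * x) in let a := / (2 * s) in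
  a / (p - 1) * (1 - ln (a / ((p - 1) * h))).

Lemma case_pf d x s : 0 < x -> x < / 2 -> 0 < s -> forall h h', 0 < h -> 0 < h' ->
  ln h' <= G x s h -> forall n : mindex d,
  weight h' (RFflat s) n <= 1 * weight h (RFpos x) n.
Proof.
move=> Hx Hx2 Hs h h' Hh Hh' HG n; rewrite Rmult_1_l /=.
set p := / (2 * x). set a := / (2 * s).
have Hp : 1 < p by rewrite /p -Rinv_1; apply: Rinv_lt_contravar; lra.
have Ha : 0 < a by rewrite /a; apply: Rinv_0_lt_compat; lra.
have [Hm1 Hm2] := mfact_le n.
apply: Rle_trans (_ : h' ^ mabs n * Rpower (INR (mabs n)`!) a <= _).
  apply: Rmult_le_compat_l; first by apply: pow_le; lra.
  apply: Rle_Rpower_l; lra.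
move: (mabs n) => k.
case: k => [|k].
  rewrite /= /Rpower ln_1 Rmult_0_r Rmult_0_r exp_0; lra.
rewrite /natpow -(Rpower_pow _ _ Hh') /Rpower -exp_plus; apply: exple.
set K := INR k.+1. set L := ln K.
have HK : 1 <= K by apply: (le_INR 1); lia.
have HL : 0 <= L by rewrite /L -ln_1; apply: lnle; lra.
have Hf := ln_fact_le k.+1. rewrite -/K -/L in Hf.
set E := exp ((p - 1) * L).
have HE : exp (p * L) = K * E.
  rewrite /E -(exp_ln K) ?(_ : 0 < K) -?exp_plus; try lra.
  rewrite -/L; f_equal; ring.
rewrite HE.
set c := a / ((p - 1) * h).
have Hc : 0 < c by rewrite /c; apply: Rdiv_lt_0_compat; nra.
have H1 := exp_ineq1_le ((p - 1) * L - ln c).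
rewrite /Rminus exp_plus exp_Ropp exp_ln // -/E in H1.
have H2 : c * (1 + ((p - 1) * L + - ln c)) <= E.
  have := Rmult_le_compat_l c _ _ (Rlt_le _ _ Hc) H1.
  by rewrite (Rmult_comm E) -Rmult_assoc Rinv_r ?Rmult_1_l; lra.
have Hhc : h * c = a / (p - 1) by rewrite /c; field; lra.
have HG' : G x s h = a / (p - 1) * (1 - ln c) by [].
have H3 : G x s h + a * L <= h * E.
  rewrite HG'.
  have : h * (c * (1 + ((p - 1) * L + - ln c))) <= h * E by apply: Rmult_le_compat_l; lra.
  rewrite -Rmult_assoc Hhc.
  have -> : a / (p - 1) * (1 + ((p - 1) * L + - ln c)) = a / (p - 1) * (1 - ln c) + a * L
    by field; lra.
  lra.
have H4 : K * ln h' <= K * G x s h by apply: Rmult_le_compat_l; lra.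
have H5 : a * ln (INR (k.+1)`!) <= a * (K * L) by apply: Rmult_le_compat_l; lra.
have H6 : K * (G x s h + a * L) <= K * (h * E) by apply: Rmult_le_compat_l; lra.
nra.
Qed.

Lemma case_fp d s y : 0 < s -> / 2 <= y -> forall h h', 0 < h -> 0 < h' ->
  exists K, 0 <= K /\ forall n : mindex d,
  weight h' (RFpos y) n <= K * weight h (RFflat s) n.
Proof.
move=> Hs Hy h h' Hh Hh'.
set q := / (2 * y). set a := / (2 * s).
have Hq : q <= 1 by rewrite /q -Rinv_1; apply: Rinv_le_contravar; lra.
have Ha : 0 < a by rewrite /a; apply: Rinv_0_lt_compat; lra.
have [c Hc] := single_var ((h' - ln h) / a).
set S := INR (size (index_enum 'I_d)).
exists (exp (a * (S * c))); split; first by left; exact: exp_pos.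
move=> n; rewrite /weight.
have Hsl := seq_ln n Hc (index_enum 'I_d). rewrite -/S in Hsl.
change (\sum_(i <- index_enum 'I_d) n i)%N with (mabs n) in Hsl.
change (\prod_(i <- index_enum 'I_d) (n i)`!)%N with (mfact n) in Hsl.
have [Hm1 _] := mfact_le n.
have Hnp : natpow (mabs n) q <= INR (mabs n).
  case: (mabs n) => [|k]; first by right.
  rewrite /natpow -{2}(Rpower_1 (INR k.+1)); last by apply: lt_0_INR; lia.
  apply: Rle_Rpower => //; apply: (le_INR 1); lia.
apply: Rle_trans (_ : exp (h' * INR (mabs n)) <= _).
  apply: exple; apply: Rmult_le_compat_l; [lra | exact: Hnp].
rewrite -(Rpower_pow (mabs n) h Hh) /Rpower -!exp_plus; apply: exple.
have Hab : a * (INR (mabs n) * ((h' - ln h) / a)) = INR (mabs n) * h' - INR (mabs n) * ln h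
  by field; lra.
have := Rmult_le_compat_l a _ _ (Rlt_le _ _ Ha) Hsl.
rewrite Hab -/a. lra.
Qed.

Theorem lemma6p1 (alpha beta : Rflat) :
  Rflat_valid alpha -> Rflat_valid beta -> Rflat_lt alpha beta ->
  forall d : nat,
    (forall f : mindex d -> C, ell alpha f -> ell beta f) /\
    (forall f : mindex d -> C, ell0 alpha f -> ell0 beta f).
Proof.
case: alpha => [x|s1]; case: beta => [y|s2] /= Ha Hb Hlt d; split.
- move=> f [h [Hh Hf]]; exists h; split => //.
  exact: (transfer (Rle_0_1) (case_pp Ha Hlt Hh)).
- move=> f Hf h Hh.
  exact: (transfer (Rle_0_1) (case_pp Ha Hlt Hh) (Hf h Hh)).
- move=> f [h [Hh Hf]]; exists (exp (G x s2 h)); split; first exact: exp_pos.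
  apply: (transfer (Rle_0_1) _ Hf).
  apply: case_pf => //; first exact: exp_pos.
  rewrite ln_exp; lra.
- move=> f Hf h' Hh'.
  set p := / (2 * x). set a := / (2 * s2).
  have Hp : 1 < p by rewrite /p -Rinv_1; apply: Rinv_lt_contravar; lra.
  have Hap : 0 < a by rewrite /a; apply: Rinv_0_lt_compat; lra.
  set T := (p - 1) / a * ln h' - 1 + ln (a / (p - 1)).
  have HG : ln h' <= G x s2 (exp T).
    rewrite /G -/p -/a.
    have Hpa : 0 < a / (p - 1) by apply: Rdiv_lt_0_compat; lra.
    have HeT := exp_pos T.
    have Hln : ln (a / ((p - 1) * exp T)) = ln (a / (p - 1)) - T.
      have -> : a / ((p - 1) * exp T) = (a / (p - 1)) * / exp T by field; lra.
      rewrite ln_mult ?ln_Rinv ?ln_exp //; try lra; exact: Rinv_0_lt_compat.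
    rewrite Hln /T; right; field; lra.
  exact: (transfer (Rle_0_1) (case_pf Ha Hlt Hb (exp_pos T) Hh' HG) (Hf _ (exp_pos T))).
- move=> f [h [Hh Hf]]; exists 1; split; first lra.
  have [K [HK HK']] := case_fp d Ha Hlt Hh Rlt_0_1.
  exact: (transfer HK HK' Hf).
- move=> f Hf h' Hh'.
  have [K [HK HK']] := case_fp d Ha Hlt Rlt_0_1 Hh'.
  exact: (transfer HK HK' (Hf 1 Rlt_0_1)).
- move=> f [h [Hh Hf]]; exists h; split => //.
  exact: (transfer (Rle_0_1) (case_ff Ha Hlt Hh)).
- move=> f Hf h Hh.
  exact: (transfer (Rle_0_1) (case_ff Ha Hlt Hh) (Hf h Hh)).
Qed.
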